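(* Let $R>0$ and let $A\subset\mathbb{R}^d$ be such that $A$ and $\overline{A^c}$ are $R$-supported bodies and $\partial A=\partial\overline{A^c}$. Then $\mathrm{reach}(A)\ge R$.
   Context: A body is a nonempty closed subset of $\mathbb{R}^d$; $A^c=\mathbb{R}^d\setminus A$; $\overline{X}$ is the closure. $B(x)=\{y:|y-x|<R\}$; $S^{d-1}$ the unit sphere. For a body $A$ and $a\in\partial A$, $\mathcal{N}_R(A,a)=\{v\in S^{d-1}: A\cap B(a+Rv)=\emptyset\}$; $A$ is $R$-supported if $\mathcal{N}_R(A,a)\ne\emptyset$ for all $a\in\partial A$. $\mathrm{Unp}(A)$ is the set of points with a unique nearest point in $A$; $\mathrm{reach}(A,a)=\sup\{\rho>0: \{x:|x-a|<\rho\}\subset\mathrm{Unp}(A)\}$, $\mathrm{reach}(A)=\inf_{a\in A}\mathrm{reach}(A,a)$. *)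

(* Defs.v *)
From HB Require Import structures.
From mathcomp Require Import all_boot all_order all_algebra.
From mathcomp Require Import classical_sets boolp reals constructive_ereal ereal.
Set Implicit Arguments. Unset Strict Implicit. Unset Printing Implicit Defensive.
Import Order.TTheory GRing.Theory Num.Theory.
Local Open Scope ring_scope.
Local Open Scope classical_set_scope.

Definition edist (R : realType) (d : nat) (x y : 'rV[R]_d) : R :=
  Num.sqrt (\sum_(i < d) (x ord0 i - y ord0 i) ^+ 2).

Definition eball (R : realType) (d : nat) (c : 'rV[R]_d) (r : R) : set 'rV[R]_d :=
  [set y | edist y c < r].

Definition eclosure (R : realType) (d : nat) (A : set 'rV[R]_d) : set 'rV[R]_d :=
  [set x | forall e : R, 0 < e -> exists y, A y /\ edist x y < e].

Definition eclosed (R : realType) (d : nat) (A : set 'rV[R]_d) : Prop :=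
  eclosure A `<=` A.

Definition body (R : realType) (d : nat) (A : set 'rV[R]_d) : Prop :=
  A !=set0 /\ eclosed A.

Definition eboundary (R : realType) (d : nat) (A : set 'rV[R]_d) : set 'rV[R]_d :=
  eclosure A `&` eclosure (~` A).

Definition unit_sphere (R : realType) (d : nat) (v : 'rV[R]_d) : Prop :=
  edist v 0 = 1.

Definition normal_set (R : realType) (d : nat) (rad : R) (A : set 'rV[R]_d)
  (a : 'rV[R]_d) : set 'rV[R]_d :=
  [set v | unit_sphere v /\ A `&` eball (a + rad *: v) rad = set0].

Definition R_supported (R : realType) (d : nat) (rad : R) (A : set 'rV[R]_d) : Prop :=
  forall a, eboundary A a -> normal_set rad A a !=set0.

Definition Unp (R : realType) (d : nat) (A : set 'rV[R]_d) : set 'rV[R]_d :=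
  [set x | exists a, (A a /\ forall b, A b -> edist x a <= edist x b) /\
     forall a', (A a' /\ forall b, A b -> edist x a' <= edist x b) -> a' = a].

Definition reach_at (R : realType) (d : nat) (A : set 'rV[R]_d) (a : 'rV[R]_d)
  : \bar R :=
  ereal_sup [set rho%:E | rho in [set rho : R | 0 < rho /\ eball a rho `<=` Unp A]].

Definition reach (R : realType) (d : nat) (A : set 'rV[R]_d) : \bar R :=
  ereal_inf [set reach_at A a | a in A].

(* Main.v *)
Require Import Defs.
From mathcomp Require Import all_boot all_order all_algebra.
From mathcomp Require Import classical_sets boolp reals constructive_ereal ereal.
From mathcomp Require Import topology normedtype derive matrix_normedtype.
From mathcomp Require Import ring lra.
Import Defs.
Import numFieldNormedType.Exports.
Import Order.TTheory GRing.Theory Num.Theory.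
Local Open Scope ring_scope.
Local Open Scope classical_set_scope.

Definition dot {R : realType} {d : nat} (u v : 'rV[R]_d) : R :=
  \sum_(i < d) u ord0 i * v ord0 i.

Lemma edistE {R : realType} {d : nat} (x y : 'rV[R]_d) :
  edist x y = Num.sqrt (dot (x - y) (x - y)).
Proof. rewrite /edist /dot; congr Num.sqrt; apply eq_bigr => i _; rewrite !mxE expr2 //. Qed.

Lemma dotC {R : realType} {d : nat} (u v : 'rV[R]_d) : dot u v = dot v u.
Proof. by apply eq_bigr => i _; rewrite mulrC. Qed.

Lemma dot_ge0 {R : realType} {d : nat} (u : 'rV[R]_d) : 0 <= dot u u.
Proof. by apply: sumr_ge0 => i _; rewrite -expr2 sqr_ge0. Qed.

Lemma dot_eq0 {R : realType} {d : nat} (u : 'rV[R]_d) : dot u u = 0 -> u = 0.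
Proof.
move=> H; apply/rowP => i; rewrite mxE.
have h := psumr_eq0P (P := xpredT) (F := fun i => u ord0 i * u ord0 i).
have : u ord0 i * u ord0 i = 0.
  by apply: h => // j _; rewrite -expr2 sqr_ge0.
by move/eqP; rewrite mulf_eq0 orbb => /eqP.
Qed.

Lemma dot_lin {R : realType} {d : nat} (a b : R) (u v : 'rV[R]_d) :
  dot (a *: u + b *: v) (a *: u + b *: v) =
  a ^+ 2 * dot u u + 2 * a * b * dot u v + b ^+ 2 * dot v v.
Proof.
rewrite /dot !mulr_sumr -!big_split; apply eq_bigr => i _; rewrite !mxE /=; ring.
Qed.

Lemma dot_lin1 {R : realType} {d : nat} (a : R) (u : 'rV[R]_d) :
  dot (a *: u) (a *: u) = a ^+ 2 * dot u u.
Proof. by rewrite /dot !mulr_sumr; apply eq_bigr => i _; rewrite !mxE /=; ring. Qed.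

Lemma edist_lt {R : realType} {d : nat} (x y : 'rV[R]_d) r : 0 < r ->
  (edist x y < r) = (dot (x - y) (x - y) < r ^+ 2).
Proof.
move=> r0; rewrite edistE -{1}(ger0_norm (ltW r0)) -sqrtr_sqr ltr_sqrt //.
by rewrite exprn_gt0.
Qed.

Lemma edist_le {R : realType} {d : nat} (x y : 'rV[R]_d) r : 0 <= r ->
  (edist x y <= r) = (dot (x - y) (x - y) <= r ^+ 2).
Proof.
move=> r0; rewrite edistE -{1}(ger0_norm r0) -sqrtr_sqr ler_sqrt //.
by rewrite exprn_ge0.
Qed.

Lemma edist_sq {R : realType} {d : nat} (x y : 'rV[R]_d) :
  edist x y ^+ 2 = dot (x - y) (x - y).
Proof. by rewrite edistE sqr_sqrtr // dot_ge0. Qed.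

Lemma edist_ge0 {R : realType} {d : nat} (x y : 'rV[R]_d) : 0 <= edist x y.
Proof. by rewrite edistE sqrtr_ge0. Qed.

Lemma edist_sym {R : realType} {d : nat} (x y : 'rV[R]_d) : edist x y = edist y x.
Proof.
rewrite !edistE; congr Num.sqrt; have -> : y - x = (-1) *: (x - y).
  by apply/rowP => i; rewrite !mxE; ring.
by rewrite dot_lin1; ring.
Qed.

Lemma edist_eq0 {R : realType} {d : nat} (x y : 'rV[R]_d) : edist x y = 0 -> x = y.
Proof.
move=> h; have : dot (x - y) (x - y) = 0 by rewrite -edist_sq h expr0n.
by move/dot_eq0/eqP; rewrite subr_eq0 => /eqP.
Qed.

Lemma edist_xx {R : realType} {d : nat} (x : 'rV[R]_d) : edist x x = 0.
Proof. by rewrite edistE subrr /dot big1 ?sqrtr0 // => i _; rewrite mxE mul0r. Qed.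

Lemma cauchy_schwarz {R : realType} {d : nat} (u v : 'rV[R]_d) :
  dot u v <= Num.sqrt (dot u u) * Num.sqrt (dot v v).
Proof.
set a := Num.sqrt (dot u u); set b := Num.sqrt (dot v v).
have a2 : a ^+ 2 = dot u u by rewrite sqr_sqrtr // dot_ge0.
have b2 : b ^+ 2 = dot v v by rewrite sqr_sqrtr // dot_ge0.
have a0 : 0 <= a by apply: sqrtr_ge0.
have b0 : 0 <= b by apply: sqrtr_ge0.
have H := dot_ge0 (b *: u + (- a) *: v).
rewrite dot_lin -a2 -b2 in H.
have [ab0|] := ltP 0 (a * b).
  have : 0 <= a * b * (a * b - dot u v) by nra.
  rewrite pmulr_rge0 // subr_ge0 //.
move=> ab.
have : a * b = 0 by apply/eqP; rewrite eq_le ab mulr_ge0.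
move/eqP; rewrite mulf_eq0 => /orP[] /eqP h.
  have : u = 0 by apply: dot_eq0; rewrite -a2 h expr0n.
  by move->; rewrite /dot big1 ?mulr_ge0 // => i _; rewrite mxE mul0r.
have : v = 0 by apply: dot_eq0; rewrite -b2 h expr0n.
by move->; rewrite /dot big1 ?mulr_ge0 // => i _; rewrite mxE mulr0.
Qed.

Lemma edist_tri {R : realType} {d : nat} (x y z : 'rV[R]_d) :
  edist x z <= edist x y + edist y z.
Proof.
have e : x - z = 1 *: (x - y) + 1 *: (y - z) by apply/rowP => i; rewrite !mxE; ring.
rewrite edist_le ?addr_ge0 ?edist_ge0 // e dot_lin -!edist_sq.
have := cauchy_schwarz (x - y) (y - z); rewrite -!edistE.
have := edist_ge0 x y; have := edist_ge0 y z. nra.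
Qed.
Lemma tangent {R : realType} {d : nat} (c1 c2 p : 'rV[R]_d) (r1 r2 : R) :
  0 < r1 -> 0 < r2 -> edist p c1 = r1 -> edist p c2 = r2 ->
  (forall z, edist z c1 < r1 -> edist z c2 < r2 -> False) ->
  r2 *: (p - c1) = r1 *: (c2 - p).
Proof.
move=> r10 r20 e1 e2 disj.
have Da : dot (p - c1) (p - c1) = r1 ^+ 2 by rewrite -edist_sq e1.
have Db : dot (c2 - p) (c2 - p) = r2 ^+ 2 by rewrite -edist_sq edist_sym e2.
set ab := dot (p - c1) (c2 - p).
have [H|H] := eqVneq (r2 *: (p - c1) + (- r1) *: (c2 - p)) 0.
  apply/eqP; rewrite -subr_eq0; apply/eqP; rewrite -H.
  by apply/rowP => i; rewrite !mxE; ring.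
have Hpos : 0 < dot (r2 *: (p - c1) + (- r1) *: (c2 - p)) (r2 *: (p - c1) + (- r1) *: (c2 - p)).
  rewrite lt_neqAle dot_ge0 andbT eq_sym; apply/negP => /eqP /dot_eq0 h.
  by rewrite h eqxx in H.
rewrite dot_lin Da Db -/ab in Hpos.
have abl : ab < r1 * r2.
  have : 0 < r1 * r2 * (r1 * r2 - ab) by nra.
  by rewrite pmulr_rgt0 ?mulr_gt0 // subr_gt0.
set s := r1 + r2.
have s0 : 0 < s by rewrite /s; lra.
set t := r1 / s.
have ts : t * s = r1 by rewrite /t divfK // gt_eqF.
have ts2 : (1 - t) * s = r2 by rewrite mulrBl ts mul1r /s; ring.
have t0 : 0 < t by rewrite /t divr_gt0.
have t1 : 0 < 1 - t by rewrite -(pmulr_lgt0 _ s0) ts2.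
have X : dot (1 *: (p - c1) + 1 *: (c2 - p)) (1 *: (p - c1) + 1 *: (c2 - p)) < s ^+ 2.
  rewrite dot_lin Da Db -/ab /s; nra.
exfalso; apply: (disj (c1 + t *: (c2 - c1))).
  rewrite edist_lt //.
  have -> : c1 + t *: (c2 - c1) - c1 = t *: (1 *: (p - c1) + 1 *: (c2 - p)).
    by apply/rowP => i; rewrite !mxE; ring.
  move: X; set D := dot _ _ => X; rewrite dot_lin1 -/D.
  have : t ^+ 2 * D < t ^+ 2 * s ^+ 2 by rewrite ltr_pM2l // exprn_gt0.
  by rewrite -exprMn ts.
rewrite edist_lt //.
have -> : c1 + t *: (c2 - c1) - c2 = (t - 1) *: (1 *: (p - c1) + 1 *: (c2 - p)).
  by apply/rowP => i; rewrite !mxE; ring.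
rewrite dot_lin1 -ts2 exprMn.
have -> : (t - 1) ^+ 2 = (1 - t) ^+ 2 by ring.
by rewrite ltr_pM2l // exprn_gt0.
Qed.

Lemma setI0_pt {T : Type} (S U : set T) z : S `&` U = set0 -> S z -> U z -> False.
Proof. by move=> H Sz Uz; have : (S `&` U) z by []; rewrite H. Qed.

Lemma unit_dot {R : realType} {d : nat} (w : 'rV[R]_d) : unit_sphere w -> dot w w = 1.
Proof. by rewrite /unit_sphere => h; rewrite -(subr0 w) -edist_sq h expr1n. Qed.

Lemma row_eq_coord {R : realType} {d : nat} (M N : 'rV[R]_d) i : M = N -> M ord0 i = N ord0 i.
Proof. by move->. Qed.

Lemma edist_eqr {R : realType} {d : nat} (x y : 'rV[R]_d) r : 0 <= r ->
  dot (x - y) (x - y) = r ^+ 2 -> edist x y = r.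
Proof. by move=> r0 h; rewrite edistE h sqrtr_sqr ger0_norm. Qed.

Lemma uniq_near {R : realType} {d : nat} (rad : R) (A : set 'rV[R]_d) (y p q : 'rV[R]_d) :
  0 < rad -> R_supported rad A -> R_supported rad (eclosure (~` A)) ->
  eboundary A = eboundary (eclosure (~` A)) ->
  A p -> A q -> ~ A y -> (forall b, A b -> edist y p <= edist y b) ->
  edist y q = edist y p -> edist y p < rad -> q = p.
Proof.
move=> rad0 SA SB EB Ap Aq nAy pmin eq pr.
set del := edist y p.
have del0 : 0 < del.
  rewrite lt_neqAle edist_ge0 andbT eq_sym; apply/eqP => /edist_eq0 h.
  by apply: nAy; rewrite h.
have Dp : dot (y - p) (y - p) = del ^+ 2 by rewrite -edist_sq.
have bdA : eboundary A p.
  split.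
    by move=> e e0; exists p; split => //; rewrite edist_xx.
  move=> e e0.
  set t := Order.min 1 (e / (2 * del)).
  have t1 : t <= 1 by rewrite /t ge_min lexx.
  have t2 : t <= e / (2 * del) by rewrite /t ge_min lexx orbT.
  have tp : 0 < t by rewrite /t lt_min ltr01 divr_gt0 // mulr_gt0.
  have tde : t * del <= e / 2.
    have -> : e / 2 = e / (2 * del) * del by field; rewrite gt_eqF.
    by rewrite ler_pM2r.
  exists (p + t *: (y - p)); split.
    move=> Az; have := pmin _ Az.
    rewrite /del !edist_le ?edist_ge0 // ?edist_sq //.
    have -> : y - (p + t *: (y - p)) = (1 - t) *: (y - p).
      by apply/rowP => i; rewrite !mxE; ring.
    rewrite dot_lin1 Dp -/del.
    have h1 : (1 - t) ^+ 2 < 1 by nra.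
    by rewrite -[X in X <= _]mul1r ler_pM2r ?exprn_gt0 // leNgt h1.
  rewrite edist_lt //.
  have -> : p - (p + t *: (y - p)) = (- t) *: (y - p).
    by apply/rowP => i; rewrite !mxE; ring.
  rewrite dot_lin1 Dp -exprMn.
  have h0 : 0 <= t * del by rewrite mulr_ge0 // ltW.
  have : (t * del) ^+ 2 <= (e / 2) ^+ 2 by rewrite lerXn2r // ?nnegrE // divr_ge0 // ltW.
  move=> h; rewrite mulNr sqrrN; apply: (le_lt_trans h); nra.
have bdB : eboundary (eclosure (~` A)) p by rewrite -EB.
have [w [uw Bw]] := SB p bdB.
have inner : forall z, edist z (p + rad *: w) < rad -> A z.
  move=> z zb; apply: contrapT => nAz.
  apply: (@setI0_pt _ _ _ z Bw) => //.
  by move=> e e0; exists z; split => //; rewrite edist_xx.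
have Dw := unit_dot _ uw.
have pc2 : edist p (p + rad *: w) = rad.
  apply: edist_eqr; first exact: ltW.
  have -> : p - (p + rad *: w) = (- rad) *: w by apply/rowP => i; rewrite !mxE; ring.
  by rewrite dot_lin1 Dw mulr1 sqrrN.
have T1 := @tangent _ _ y (p + rad *: w) p del rad del0 rad0 (edist_sym p y) pc2.
have T1' : rad *: (p - y) = del *: (p + rad *: w - p).
  apply: T1 => z z1 z2; have := pmin _ (inner _ z2).
  move=> h; have := edist_sym y z; rewrite /del in z1; lra.
have hp : forall i, p ord0 i = y ord0 i + del * w ord0 i.
  move=> i; have := row_eq_coord _ _ i T1'; rewrite !mxE => h.
  have : rad * (p ord0 i - (y ord0 i + del * w ord0 i)) = 0.
    have -> : rad * (p ord0 i - (y ord0 i + del * w ord0 i)) = rad * (p ord0 i - y ord0 i) - del * (p ord0 i + rad * w ord0 i - p ord0 i) by ring.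
    by rewrite h subrr.
  by move/eqP; rewrite mulf_eq0 gt_eqF //= subr_eq0 => /eqP.
have [v [uv Av]] := SA p bdA.
have Dv := unit_dot _ uv.
have pc1 : edist p (p + rad *: v) = rad.
  apply: edist_eqr; first exact: ltW.
  have -> : p - (p + rad *: v) = (- rad) *: v by apply/rowP => i; rewrite !mxE; ring.
  by rewrite dot_lin1 Dv mulr1 sqrrN.
have T2 := @tangent _ _ (p + rad *: v) (p + rad *: w) p rad rad rad0 rad0 pc1 pc2.
have T2' : rad *: (p - (p + rad *: v)) = rad *: (p + rad *: w - p).
  apply: T2 => z z1 z2; apply: (@setI0_pt _ _ _ z Av) => //.
  exact: inner.
have hv : forall i, v ord0 i = - w ord0 i.
  move=> i; have := row_eq_coord _ _ i T2'; rewrite !mxE => h.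
  have : (rad * rad) * (v ord0 i + w ord0 i) = 0.
    have -> : (rad * rad) * (v ord0 i + w ord0 i) = - (rad * (p ord0 i + - (p ord0 i + rad * v ord0 i))) + rad * (p ord0 i + rad * w ord0 i - p ord0 i) by ring.
    by rewrite h; ring.
  move/eqP; rewrite mulf_eq0 mulf_eq0 gt_eqF //= addr_eq0 => /eqP //.
have qout : rad <= edist q (p + rad *: v).
  rewrite leNgt; apply/negP => h; exact: (@setI0_pt _ _ _ q Av Aq h).
have Da : dot (q - y) (q - y) = del ^+ 2 by rewrite -edist_sq edist_sym eq.
set aw := dot (q - y) w.
have E1 : q - (p + rad *: v) = 1 *: (q - y) + (rad - del) *: w.
  by apply/rowP => i; rewrite !mxE hp hv; ring.
move: qout; rewrite leNgt edist_lt // E1 dot_lin Dw Da -/aw -leNgt => qout.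
have awd : del <= aw.
  have : 2 * (rad - del) * del <= 2 * (rad - del) * aw by nra.
  by rewrite ler_pM2l // mulr_gt0 // subr_gt0.
have : dot (1 *: (q - y) + (- del) *: w) (1 *: (q - y) + (- del) *: w) = 0.
  apply/eqP; rewrite eq_le dot_ge0 andbT dot_lin Dw Da -/aw; nra.
move/dot_eq0 => h0; apply/rowP => i; have := row_eq_coord _ _ i h0; rewrite !mxE hp.
lra.
Qed.
Lemma ball_coord {R : realType} {d : nat} (x z : 'rV[R]_d) (r : R) :
  ball x r z -> forall i, `|x ord0 i - z ord0 i| < r.
Proof. case=> r0 h i; have := h ord0 i. rewrite /ball /=. done. Qed.

Lemma sum_const_ord {R : ringType} d (c : R) : \sum_(i < d) c = c *+ d.
Proof. by rewrite big_const_ord; elim: d => //= n ->; rewrite mulrS. Qed.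

Lemma coord_le_edist {R : realType} {d : nat} (x y : 'rV[R]_d) i :
  `|x ord0 i - y ord0 i| <= edist x y.
Proof.
rewrite -sqrtr_sqr /edist ler_sqrt ?sumr_ge0 // => [|j _]; last exact: sqr_ge0.
rewrite (bigD1 i) //= lerDl; apply: sumr_ge0 => j _; exact: sqr_ge0.
Qed.

Lemma ball_edist {R : realType} {d : nat} (x : 'rV[R]_d) (e : R) : 0 < e ->
  exists2 r : R, 0 < r & forall z, ball x r z -> edist x z < e.
Proof.
move=> e0; set N : R := d%:R.
have N0 : 0 <= N by rewrite /N ler0n.
exists (e / (N + 1)); first by rewrite divr_gt0 // ltr_wpDl.
move=> z /ball_coord hz; rewrite edist_lt //.
set r := e / (N + 1).
have r0 : 0 < r by rewrite divr_gt0 // ltr_wpDl.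
have re : r * (N + 1) = e by rewrite /r divfK // gt_eqF // ltr_wpDl.
have : dot (x - z) (x - z) <= \sum_(i < d) r ^+ 2.
  apply: ler_sum => i _; rewrite !mxE -expr2.
  rewrite -real_normK ?num_real //; have := hz i; rewrite -/r.
  have := normr_ge0 (x ord0 i - z ord0 i); nra.
have -> : \sum_(i < d) r ^+ 2 = r ^+ 2 * N.
  rewrite big_const_ord /N; elim: (d) => [|n IH] /=; first by rewrite mulr0.
  by rewrite IH -natr1 mulrDr mulr1 addrC.
move=> h.
apply: (le_lt_trans h); rewrite -re; nra.
Qed.

Lemma edist_cont {R : realType} {d : nat} (y : 'rV[R]_d) :
  continuous (fun z => edist y z).
Proof.
move=> z0; apply/(@cvg_ballP _ _ _ (nbhs z0) (nbhs_filter z0)) => e e0.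
apply/nbhs_ballP; have [r r0 hr] := @ball_edist _ _ z0 e e0.
exists r => // z zb; have := hr _ zb => h.
rewrite /ball /=.
have t1 := edist_tri y z0 z; have t2 := edist_tri y z z0.
have := edist_sym z z0.
move=> H; rewrite ltr_norml; apply/andP; split; lra.
Qed.

Lemma mxnorm_le_edist {R : realType} {d : nat} (x y : 'rV[R]_d) :
  `|x - y| <= edist x y.
Proof.
have -> : `|x - y| = mx_norm (x - y) by []. rewrite mx_normrE; apply: bigmax_le; first exact: edist_ge0.
move=> [i j] _ /=; rewrite (ord1 i) !mxE; exact: coord_le_edist.
Qed.

Lemma nearest {R : realType} {d : nat} (A : set 'rV[R]_d) (a0 y : 'rV[R]_d) :
  A a0 -> eclosure A `<=` A ->
  exists p, A p /\ forall b, A b -> edist y p <= edist y b.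
Proof.
move=> Aa0 clA.
set M := edist y a0.
set K := A `&` [set z | edist y z <= M].
have K0 : K !=set0 by exists a0; split => //=; rewrite lexx.
have approx : forall z, closure K z -> forall e, 0 < e -> exists w, K w /\ edist z w < e.
  move=> z zc e e0; have [r r0 hr] := @ball_edist _ _ z e e0.
  have [w [Kw bw]] := zc _ (nbhsx_ballx z r r0).
  by exists w; split => //; apply: hr.
have cK : closed K.
  move=> z zc; split.
    by apply: clA => e e0; have [w [[Aw _] h]] := approx z zc e e0; exists w.
  rewrite /= leNgt; apply/negP => hM.
  have e0 : 0 < edist y z - M by rewrite subr_gt0.
  have [w [[_ Mw] h]] := approx z zc _ e0.
  have := edist_tri y w z; have := edist_sym z w; rewrite /= in Mw; lra.
have bK : bounded_set K.
  exists (M + `|y|); split; first by rewrite num_real.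
  move=> M' hM' x [_ Kx] /=.
  have h1 : `|x| <= `|x - y| + `|y|.
    by have := ler_normD (x - y) y; rewrite subrK.
  have := mxnorm_le_edist x y; have := edist_sym x y; rewrite /= in Kx; lra.
have [c cKc cmin] := EVT_min_rV K0 (bounded_closed_compact bK cK)
  (continuous_subspaceT (edist_cont y)).
move: cKc; rewrite inE => -[Ac Mc].
exists c; split => // b Ab.
have [bM|bM] := leP (edist y b) M.
  by apply: cmin; rewrite inE.
rewrite /= in Mc; lra.
Qed.

Theorem mainTheorem9 (R : realType) (d : nat) (rad : R) (A : set 'rV[R]_d) :
  0 < rad ->
  body A -> R_supported rad A ->
  body (eclosure (~` A)) -> R_supported rad (eclosure (~` A)) ->
  eboundary A = eboundary (eclosure (~` A)) ->
  (rad%:E <= reach A)%E.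
Proof.
move=> rad0 [[a0 Aa0] clA] SA _ SB EB.
apply/ereal_infP => _ [a Aa <-].
have sub : eball a rad `<=` Unp A.
  move=> y /= ya.
  have [p [Ap pmin]] := @nearest _ _ A a y Aa clA.
  exists p; split; first by split.
  move=> a' [Aa' a'min].
  have eqd : edist y a' = edist y p.
    by apply/eqP; rewrite eq_le a'min // pmin.
  case: (pselect (A y)) => Ay.
    have h1 := pmin _ Ay; have h2 := a'min _ Ay.
    rewrite edist_xx in h1 h2.
    have e1 : edist y p = 0 by apply/eqP; rewrite eq_le h1 edist_ge0.
    have e2 : edist y a' = 0 by apply/eqP; rewrite eq_le h2 edist_ge0.
    by rewrite -(edist_eq0 _ _ e1) -(edist_eq0 _ _ e2).
  apply: (@uniq_near _ _ rad A y p a' rad0 SA SB EB Ap Aa' Ay pmin eqd).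
  exact: (le_lt_trans (pmin _ Aa)).
apply: ereal_sup_ubound; exists rad => //.
Qed.
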